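(* For the Hard-SVM algorithm, there exist linearly-separable data distributions $D_A,D_B$ over $\mathbb{R}\times\{-1,1\}$ and a training-set size $n$ that induce an evolutionary prediction game with beneficial coexistence: there is an equilibrium $\mathbf{p}^*$ with $p^*_A>0$, $p^*_B>0$ such that each group's fitness at $\mathbf{p}^*$ exceeds its fitness when it is the sole group in the population, $F_k(\mathbf{p}^* )>F_k(\mathbf{e}_k)$ for $k\in\{A,B\}$.
   Context: Hard-SVM: given a linearly separable training set $\{(x_i,y_i)\}_{i=1}^n\subset\mathbb{R}^d\times\{-1,1\}$, output $\mathrm{sign}(w^*\cdot x+b^* )$ with $(w^*,b^* )=\arg\max_{(w,b):\|w\|=1}\min_iy_i(w\cdot x_i+b)$. The learning algorithm samples $S\sim D_{\mathbf{p}}^n$ i.i.d. from $D_{\mathbf{p}}=p_AD_A+p_BD_B$ ($\mathbf{p}\in\Delta^2$) and outputs the Hard-SVM classifier $h_S$; the evolutionary prediction game is $F_k(\mathbf{p})=\mathbb{E}_S[\Pr_{(x,y)\sim D_k}[h_S(x)=y]]$. $\mathbf{e}_k$ is the state in which only group $k$ is present. Equilibrium: $\mathrm{supp}(\mathbf{p}^* )\subseteq\arg\max_kF_k(\mathbf{p}^* )$. A distribution is linearly separable if its support can be separated by a hyperplane according to the labels. *)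

(* Defs.v *)
From HB Require Import structures.
From mathcomp Require Import all_boot all_order all_algebra.
From mathcomp Require Import reals.
From Stdlib Require Import ClassicalEpsilon.
Set Implicit Arguments. Unset Strict Implicit. Unset Printing Implicit Defensive.
Import Order.TTheory GRing.Theory Num.Theory.
Local Open Scope ring_scope.

Section HardSVM.
Variable R : realType.

Definition example := (R * R)%type.
(* A finitely supported distribution over R x {-1,1}: a list of
   ((x, y), weight) atoms. *)
Definition fdist := seq (example * R).

Definition valid_dist (D : fdist) : Prop :=
  (forall z, z \in D -> 0 <= z.2 /\ (z.1.2 = 1 \/ z.1.2 = -1)) /\
  \sum_(z <- D) z.2 = 1.

Definition in_supp (D : fdist) (e : example) : Prop :=
  exists w, (e, w) \in D /\ 0 < w.

Definition lin_separable (D : fdist) : Prop :=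
  exists w b : R, w != 0 /\
    forall e, in_supp D e -> 0 < e.2 * (w * e.1 + b).

Definition margin (s : seq example) (w b : R) : R :=
  let f (e : example) := e.2 * (w * e.1 + b) in
  match s with
  | [::] => 0
  | e :: s' => foldr (fun e' m => Num.min (f e') m) (f e) s'
  end.

Definition is_hardsvm (s : seq example) (wb : R * R) : Prop :=
  (`|wb.1| = 1 :> R) /\
  forall w' b' : R, `|w'| = 1 -> margin s w' b' <= margin s wb.1 wb.2.

(* When all training labels
   coincide the argmax does not exist (margin unbounded), and the classifier
   is then the constant classifier predicting that label. *)
Definition hardsvm (s : seq example) (x : R) : R :=
  if all (fun e => e.2 == 1) s then 1
  else if all (fun e => e.2 == -1) s then -1
  else let wb := epsilon (inhabits (1, 0)) (is_hardsvm s) in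
       Num.sg (wb.1 * x + wb.2).

Definition accuracy (D : fdist) (h : R -> R) : R :=
  \sum_(z <- D) z.2 * (h z.1.1 == z.1.2)%:R.

Definition mixture (pA pB : R) (DA DB : fdist) : fdist :=
  [seq (z.1, pA * z.2) | z <- DA] ++ [seq (z.1, pB * z.2) | z <- DB].

(* the two groups: true = A, false = B *)
(* F_k(p) = E_{S ~ D_p^n} [ Pr_{(x,y) ~ D_k} [h_S x = y] ] *)
Definition fitness (DA DB : fdist) (n : nat) (k : bool) (pA pB : R) : R :=
  let L := mixture pA pB DA DB in
  let dflt : example * R := ((0, 0), 0) in
  \sum_(t : {ffun 'I_n -> 'I_(size L)})
     (\prod_(i < n) (nth dflt L (t i)).2) *
     accuracy (if k then DA else DB)
              (hardsvm [seq (nth dflt L (t i)).1 | i <- enum 'I_n]).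

Definition equilibrium (DA DB : fdist) (n : nat) (pA pB : R) : Prop :=
  (0 < pA -> fitness DA DB n false pA pB <= fitness DA DB n true pA pB) /\
  (0 < pB -> fitness DA DB n true pA pB <= fitness DA DB n false pA pB).

End HardSVM.

(* Main.v *)
Require Import Defs.
From HB Require Import structures.
From mathcomp Require Import all_boot all_order all_algebra.
From mathcomp Require Import reals ring lra.
From Stdlib Require Import ClassicalEpsilon FunctionalExtensionality.
Import Order.TTheory GRing.Theory Num.Theory.
Local Open Scope ring_scope.

Section S.
Variable R : realType.

Lemma sum_list_ord (L : seq (example R * R)) (F : example R * R -> R) :
  \sum_(i < size L) F (nth ((0, 0), 0) L i) = \sum_(z <- L) F z.
Proof. by rewrite (big_nth ((0,0),0)) big_mkord. Qed.

Lemma fit2 (DA DB : fdist R) k pA pB :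
  fitness DA DB 2 k pA pB =
  \sum_(z1 <- mixture pA pB DA DB) \sum_(z2 <- mixture pA pB DA DB)
     (z1.2 * z2.2) * accuracy (if k then DA else DB) (hardsvm [:: z1.1; z2.1]).
Proof.
rewrite /fitness.
set L := mixture pA pB DA DB.
set m := size L.
pose h (p : 'I_m * 'I_m) : {ffun 'I_2 -> 'I_m} :=
  [ffun i : 'I_2 => if val i == 0%N then p.1 else p.2].
pose h' (t : {ffun 'I_2 -> 'I_m}) : 'I_m * 'I_m := (t ord0, t ord_max).
rewrite (reindex h); last first.
  exists h' => [p _|t _]; first by rewrite /h' /h !ffunE; case: p.
  apply/ffunP => i; rewrite /h /h' ffunE /=.
  case: i => [[|[|j]] Hi] //=; congr (t _); exact: val_inj.
rewrite -(pair_big predT predT (fun i j => let t := h (i, j) in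
   (\prod_(i0 < 2) (nth ((0, 0), 0) L (t i0)).2) *
   accuracy (if k then DA else DB)
     (hardsvm [seq (nth ((0, 0), 0) L (t i0)).1 | i0 <- enum 'I_2]))) /=.
rewrite -sum_list_ord; apply: eq_bigr => i _.
rewrite -sum_list_ord; apply: eq_bigr => j _.
rewrite enum_ordSl enum_ordSl enum_ord0 /= !big_ord_recl big_ord0 /h !ffunE /=.
by rewrite mulr1.
Qed.

Lemma minle (a c : R) : Num.min a c <= a /\ Num.min a c <= c.
Proof. by have := le_refl (Num.min a c); rewrite le_min => /andP. Qed.

Lemma norm1 (w : R) : `|w| = 1 -> w = 1 \/ w = -1.
Proof.
case: (lerP 0 w) => h; [rewrite ger0_norm // | rewrite ltr0_norm //]; first by left.
by move=> <-; right; rewrite opprK.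
Qed.

Lemma core (s : seq (example R)) (p q : R) :
  q < p -> (forall w b, margin s w b = Num.min (w * p + b) (- (w * q + b))) ->
  epsilon (inhabits ((1 : R), (0 : R))) (is_hardsvm s) = (1, - ((p + q) / 2)).
Proof.
move=> hqp Hm.
have opt : forall w b, `|w| = 1 -> margin s w b <= (p - q) / 2.
  move=> w b /norm1 hw; rewrite Hm; have [h1 h2] := minle (w * p + b) (- (w * q + b)).
  by case: hw => ew; rewrite ew in h1 h2 *; lra.
have lb : (p - q) / 2 <= margin s 1 (- ((p + q) / 2)).
  rewrite Hm /= le_min; apply/andP; split; lra.
have ex : exists wb, is_hardsvm s wb.
  exists (1, - ((p + q) / 2)); split; first by rewrite normr1.
  move=> w' b' hw; exact: (le_trans (opt _ _ hw)).
have := epsilon_spec (inhabits ((1 : R), (0 : R))) (is_hardsvm s) ex.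
case: (epsilon _ _) => w b [/= hw hmax].
have h5 := le_trans lb (hmax _ _ (normr1 _)).
rewrite Hm in h5.
have [h6 h7] := minle (w * p + b) (- (w * q + b)).
case: (norm1 w hw) => ew; rewrite ew in h5 h6 h7 *.
  by congr pair; lra.
exfalso; lra.
Qed.

Lemma n1 : ((-1 : R) == 1) = false.
Proof. by apply/eqP => h; lra. Qed.
Lemma n1' : ((1 : R) == -1) = false.
Proof. by apply/eqP => h; lra. Qed.

Lemma hs_pp (x1 x2 x : R) : hardsvm [:: (x1, 1); (x2, 1)] x = 1.
Proof. by rewrite /hardsvm /= eqxx. Qed.
Lemma hs_mm (x1 x2 x : R) : hardsvm [:: (x1, -1); (x2, -1)] x = -1.
Proof. by rewrite /hardsvm /= eqxx n1. Qed.
Lemma hs_pn (x1 x2 x : R) : x2 < x1 ->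
  hardsvm [:: (x1, 1); (x2, -1)] x = Num.sg (x - (x1 + x2) / 2).
Proof.
move=> h; rewrite /hardsvm /= ?eqxx ?n1 ?n1' ?andbF ?andbT /=.
rewrite (@core _ x1 x2) //=; last by move=> w b; rewrite /margin /= !mul1r mulN1r minC.
by rewrite mul1r.
Qed.
Lemma hs_np (x1 x2 x : R) : x1 < x2 ->
  hardsvm [:: (x1, -1); (x2, 1)] x = Num.sg (x - (x1 + x2) / 2).
Proof.
move=> h; rewrite /hardsvm /= ?eqxx ?n1 ?n1' ?andbF ?andbT /=.
rewrite (@core _ x2 x1) //=; last by move=> w b; rewrite /margin /= !mul1r mulN1r.
by rewrite (addrC x2) mul1r.
Qed.

Definition ipt := (int * int)%type.
Definition emb (e : ipt) : example R := (e.1%:~R, e.2%:~R).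
Definition embD (P : seq (ipt * nat)) : fdist R := [seq (emb z.1, z.2%:R / 4) | z <- P].
Definition svmi (e1 e2 : ipt) (x : int) : int :=
  if e1.2 == e2.2 then e1.2 else Num.sg (2 * x - (e1.1 + e2.1)).
Definition lab (y : int) := (y == 1) || (y == -1).
Definition okpair (e1 e2 : ipt) : bool :=
  [&& lab e1.2, lab e2.2 & (e1.2 != e2.2) ==> (0 < (e1.1 - e2.1) * e1.2)].

Lemma sg_half (a m : R) : Num.sg (a - m / 2) = Num.sg (2 * a - m).
Proof.
have -> : a - m / 2 = (2 * a - m) * (1 / 2) by field.
by rewrite sgrM (gtr0_sg (x := 1/2)) ?mulr1 //; lra.
Qed.

Lemma hs_int (e1 e2 : ipt) (x : int) : okpair e1 e2 ->
  hardsvm [:: emb e1; emb e2] x%:~R = (svmi e1 e2 x)%:~R.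
Proof.
case: e1 e2 => [a y1] [b y2]; rewrite /okpair /lab /svmi /emb /=.
case/and3P => /orP [] /eqP -> /orP [] /eqP -> //= H.
- exact: hs_pp.
- have hb : (b%:~R : R) < a%:~R by rewrite ltr_int; move: H; rewrite mulr1 subr_gt0.
  rewrite (hs_pn _ _ _ hb) sg_half intr_sg; congr (Num.sg _).
  by rewrite rmorphB rmorphD rmorphM.
- have hb : (a%:~R : R) < b%:~R by rewrite ltr_int; move: H; rewrite mulrN1 oppr_gt0 subr_lt0.
  rewrite (hs_np _ _ _ hb) sg_half intr_sg; congr (Num.sg _).
  by rewrite rmorphB rmorphD rmorphM.
- exact: hs_mm.
Qed.

Definition accI (e1 e2 : ipt) (D : seq (ipt * nat)) : nat :=
  foldr (fun z acc => z.2 * (svmi e1 e2 z.1.1 == z.1.2) + acc)%N 0%N D.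

Lemma accE e1 e2 D : okpair e1 e2 ->
  accuracy (embD D) (hardsvm [:: emb e1; emb e2]) = (accI e1 e2 D)%:R / 4.
Proof.
move=> ok; rewrite /accuracy /embD big_map.
elim: D => [|z D IH]; first by rewrite big_nil mul0r.
rewrite big_cons IH /= hs_int // eqr_int natrD natrM.
by field.
Qed.

Definition N (P Q D : seq (ipt * nat)) : nat :=
  \sum_(z1 <- P) \sum_(z2 <- Q) (z1.2 * z2.2 * accI z1.1 z2.1 D)%N.

Lemma block c1 c2 P Q D :
  (forall z1 z2, z1 \in P -> z2 \in Q -> okpair z1.1 z2.1) ->
  \sum_(z1 <- [seq (emb z.1, c1 * (z.2%:R / 4)) | z <- P])
    \sum_(z2 <- [seq (emb z.1, c2 * (z.2%:R / 4)) | z <- Q])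
      (z1.2 * z2.2) * accuracy (embD D) (hardsvm [:: z1.1; z2.1])
  = c1 * c2 * (N P Q D)%:R / 64.
Proof.
move=> ok; rewrite big_map /N natr_sum mulr_sumr mulr_suml.
apply: eq_big_seq => z1 h1; rewrite big_map natr_sum mulr_sumr mulr_suml.
apply: eq_big_seq => z2 h2 /=; rewrite accE ?ok // !natrM.
by field.
Qed.

Lemma sc (T : Type) (X Y1 Y2 : seq T) (F : T -> T -> R) :
  \sum_(x <- X) \sum_(y <- Y1 ++ Y2) F x y =
  \sum_(x <- X) \sum_(y <- Y1) F x y + \sum_(x <- X) \sum_(y <- Y2) F x y.
Proof. by rewrite -big_split; apply: eq_bigr => x _; rewrite big_cat. Qed.

Lemma fitE P Q (k : bool) pA pB :
  (forall z1 z2, z1 \in P ++ Q -> z2 \in P ++ Q -> okpair z1.1 z2.1) ->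
  fitness (embD P) (embD Q) 2 k pA pB =
  let D := if k then P else Q in
  (pA * pA * (N P P D)%:R + pA * pB * (N P Q D)%:R + pB * pA * (N Q P D)%:R
   + pB * pB * (N Q Q D)%:R) / 64.
Proof.
move=> ok; rewrite fit2.
have -> : mixture pA pB (embD P) (embD Q) =
  [seq (emb z.1, pA * (z.2%:R / 4)) | z <- P] ++ [seq (emb z.1, pB * (z.2%:R / 4)) | z <- Q].
  by rewrite /mixture /embD -!map_comp.
have -> : (if k then embD P else embD Q) = embD (if k then P else Q) by case: k.
rewrite big_cat /= !sc !block; first by rewrite /=; field.
all: by move=> z1 z2 h1 h2; apply: ok; rewrite mem_cat ?h1 ?h2 ?orbT.
Qed.

Definition ptsA : seq (ipt * nat) := [:: ((2, 1), 1%N); ((-4, -1), 2%N); ((9, 1), 1%N)].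
Definition ptsB : seq (ipt * nat) := [:: ((-2, -1), 1%N); ((4, 1), 2%N); ((-9, -1), 1%N)].

Lemma okAB : forall z1 z2, z1 \in ptsA ++ ptsB -> z2 \in ptsA ++ ptsB -> okpair z1.1 z2.1.
Proof.
have H : all (fun z1 => all (fun z2 => okpair z1.1 z2.1) (ptsA ++ ptsB)) (ptsA ++ ptsB).
  by vm_compute.
by move=> z1 z2 h1 h2; move/allP: H => /(_ _ h1) /allP /(_ _ h2).
Qed.
Lemma okBA : forall z1 z2, z1 \in ptsB ++ ptsA -> z2 \in ptsB ++ ptsA -> okpair z1.1 z2.1.
Proof. by move=> z1 z2 h1 h2; apply: okAB; rewrite mem_cat orbC -mem_cat. Qed.

Lemma NA : [/\ N ptsA ptsA ptsA = 44%N, N ptsA ptsB ptsA = 47%N, N ptsB ptsA ptsA = 47%N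
   & N ptsB ptsB ptsA = 48%N].
Proof. rewrite /N !big_cons !big_nil. by vm_compute. Qed.
Lemma NB : [/\ N ptsA ptsA ptsB = 48%N, N ptsA ptsB ptsB = 47%N, N ptsB ptsA ptsB = 47%N
   & N ptsB ptsB ptsB = 44%N].
Proof. rewrite /N !big_cons !big_nil. by vm_compute. Qed.
End S.

Theorem theorem7 (R : realType) :
  exists (DA DB : fdist R) (n : nat),
    [/\ valid_dist DA, valid_dist DB, lin_separable DA, lin_separable DB
        & lin_separable (DA ++ DB)] /\ (0 < n)%N /\
    exists pA pB : R,
      [/\ 0 < pA, 0 < pB & pA + pB = 1] /\
      [/\ equilibrium DA DB n pA pB,
          fitness DA DB n true 1 0 < fitness DA DB n true pA pB &
          fitness DA DB n false 0 1 < fitness DA DB n false pA pB].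
Proof.
exists (embD R ptsA), (embD R ptsB), 2%N.
have posE : forall e w, (e, w) \in embD R ptsA ++ embD R ptsB ->
    0 < e.2 * (1 * e.1 + 0).
  move=> e w; rewrite mem_cat /embD /= !inE.
  by case/orP => /or3P [] /eqP [-> _]; rewrite mul1r addr0 -intrM ltr0z.
split; first split.
- split; last by rewrite /embD big_map !big_cons big_nil /=; lra.
  move=> z; rewrite /embD /= !inE => /or3P [] /eqP -> /=; split; (lra || by [left | right]).
- split; last by rewrite /embD big_map !big_cons big_nil /=; lra.
  move=> z; rewrite /embD /= !inE => /or3P [] /eqP -> /=; split; (lra || by [left | right]).
- exists 1, 0; split; first exact: oner_neq0.
  by move=> e [w [hin _]]; apply: (posE e w); rewrite mem_cat hin.
- exists 1, 0; split; first exact: oner_neq0.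
  by move=> e [w [hin _]]; apply: (posE e w); rewrite mem_cat hin orbT.
- exists 1, 0; split; first exact: oner_neq0.
  by move=> e [w [hin _]]; apply: (posE e w).
split => //.
exists (1/2), (1/2); split; first by split; lra.
have FE k pA pB := @fitE R ptsA ptsB k pA pB okAB.
rewrite /equilibrium !FE /=.
case: NA => -> -> -> ->; case: NB => -> -> -> ->.
split; first split => _.
all: lra.
Qed.
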